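(* Let $(X,\mathcal{A},\mu)$ be a probability space, $\theta$ a measure-preserving endomorphism and $A\subset X$ a hole. Then the map $\varphi\mapsto\rho(A,\varphi)$, defined on the set of bounded ceiling functions $\varphi$ for which the escape rate $\rho(A,\varphi)$ exists, is continuous with respect to the supremum norm $\|\cdot\|_\infty$.
   Context: A ceiling function is a measurable $\varphi:X\to\mathbb{R}$ with $\inf\varphi>0$. $S_n\varphi=\sum_{k=0}^{n-1}\varphi\circ\theta^k$, $N_t^\varphi(x)=\min\{n\in\mathbb{N}_0:S_n\varphi(x)>t\}$. Special flow over $\theta$ under $\varphi$: $\overline{X}_\varphi=\{(x,s):0\le s<\varphi(x)\}$, $\overline{\mu}_\varphi$ the restriction of $\mu\otimes$Lebesgue, $\Phi^\varphi_t(x,s)=(x,s+t)$ if $t<\varphi(x)-s$, else $(\theta^{N-1}x,s+t-S_{N-1}\varphi(x))$ with $N=N^\varphi_{s+t}(x)$. A hole $A\subset X$ is a measurable set with $\bigcup_{n\ge0}\theta^{-n}(A)=X$ a.e. The escape rate $\rho(A,\varphi)$ is $\lim_{t\to\infty}-\frac1t\log\overline{\mu}_\varphi(\{(x,s):\forall\tau\in[0,t]:\Phi^\varphi_\tau(x,s)\notin A\times\mathbb{R}\})$ when the limit exists. *)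

(* Defs.v *)
From HB Require Import structures.
From mathcomp Require Import all_boot all_order all_algebra.
From mathcomp Require Import all_classical all_reals all_analysis.
Set Implicit Arguments. Unset Strict Implicit. Unset Printing Implicit Defensive.
Import Order.TTheory GRing.Theory Num.Theory.
Import numFieldNormedType.Exports.
Local Open Scope classical_set_scope.
Local Open Scope ring_scope.

Section SpecialFlow.
Context d (X : measurableType d) (R : realType).
Implicit Types (theta : X -> X) (phi : X -> R) (A : set X).

Definition measure_preserving (mu : {measure set X -> \bar R}) theta :=
  measurable_fun setT theta /\
  forall B : set X, measurable B -> mu (theta @^-1` B) = mu B.

Definition is_hole (mu : {measure set X -> \bar R}) theta A :=
  measurable A /\
  mu.-negligible (~` \bigcup_n ((iter n theta) @^-1` A)).

Definition ceiling_function phi :=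
  measurable_fun setT phi /\ 0 < inf (range phi).


Definition birkhoff_sum theta phi (n : nat) (x : X) : R :=
  \sum_(k < n) phi (iter k theta x).

(* N_t^phi(x) = min {n : S_n phi(x) > t}  (0 if no such n, which never
   happens for a ceiling function) *)
Definition Nt theta phi (t : R) (x : X) : nat :=
  match pselect (exists n : nat, t < birkhoff_sum theta phi n x) with
  | left h => ex_minn h
  | right _ => 0%N
  end.

Definition special_flow theta phi (t : R) (p : X * R) : X * R :=
  let x := p.1 in let s := p.2 in
  if t < phi x - s then (x, s + t)
  else let N := Nt theta phi (s + t) x in
       (iter N.-1 theta x, s + t - birkhoff_sum theta phi N.-1 x).

Definition suspension phi : set (X * R) :=
  [set p | 0 <= p.2 /\ p.2 < phi p.1].

Definition susp_measure (mu : {measure set X -> \bar R}) phi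
    (S : set (X * R)) : \bar R :=
  ((mu \x (@lebesgue_measure R)) (suspension phi `&` S))%E.

Definition survivor theta phi A (t : R) : set (X * R) :=
  [set p | suspension phi p /\
           forall tau : R, 0 <= tau <= t -> ~ A (special_flow theta phi tau p).1].

Definition escape_rate_is (mu : {measure set X -> \bar R}) theta A phi
    (r : R) : Prop :=
  (\forall t \near +oo%R,
      (0 < susp_measure mu phi (survivor theta phi A t))%E) /\
  (fun t : R => - (t^-1 * ln (fine (susp_measure mu phi (survivor theta phi A t)))))
     @ +oo%R --> r.

End SpecialFlow.

(* Main.v *)
Require Import Defs.
From HB Require Import structures.
From mathcomp Require Import all_boot all_order all_algebra.
From mathcomp Require Import all_classical all_reals all_analysis.
From mathcomp Require Import lra.
Import Order.TTheory GRing.Theory Num.Theory.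
Import numFieldNormedType.Exports.
Local Open Scope classical_set_scope.
Local Open Scope ring_scope.
Set Implicit Arguments. Unset Strict Implicit.

Section Flow.
Context d (X : measurableType d) (R : realType).
Variables (theta : X -> X) (A : set X).
Implicit Types (f g : X -> R).

Lemma bs0 f x : birkhoff_sum theta f 0 x = 0.
Proof. by rewrite /birkhoff_sum big_ord0. Qed.

Lemma bsS f n x : birkhoff_sum theta f n.+1 x =
  birkhoff_sum theta f n x + f (iter n theta x).
Proof. by rewrite /birkhoff_sum big_ord_recr. Qed.

Lemma bs_le f (fpos : forall x, 0 < f x) x m n : (m <= n)%N ->
  birkhoff_sum theta f m x <= birkhoff_sum theta f n x.
Proof.
elim: n => [|n IH]; first by rewrite leqn0 => /eqP->.
rewrite leq_eqVlt => /orP[/eqP->//|]; rewrite ltnS => /IH H.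
rewrite bsS; apply: (le_trans H); rewrite lerDl; exact/ltW.
Qed.

Lemma bs_lt f (fpos : forall x, 0 < f x) x m n : (m < n)%N ->
  birkhoff_sum theta f m x < birkhoff_sum theta f n x.
Proof.
move=> mn; apply: (@lt_le_trans _ _ (birkhoff_sum theta f m.+1 x)).
  by rewrite bsS ltrDl.
exact: bs_le.
Qed.

Lemma bs_scale f g k (k0 : 0 <= k) (kfg : forall x, k * f x <= g x) x n :
  k * birkhoff_sum theta f n x <= birkhoff_sum theta g n x.
Proof.
elim: n => [|n IH]; first by rewrite !bs0 mulr0.
by rewrite !bsS mulrDr lerD.
Qed.

Lemma flow_index f x s tau : 0 <= s + tau ->
  exists n, (special_flow theta f tau (x, s)).1 = iter n theta x /\
            birkhoff_sum theta f n x <= s + tau.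
Proof.
move=> h; rewrite /special_flow /=.
case: ifP => _; first by exists 0%N; rewrite bs0.
rewrite /Nt; case: pselect => [ex|_] /=; last by exists 0%N; rewrite bs0.
case: ex_minnP => m Pm minm.
exists m.-1; split => //.
case: m Pm minm => [|m] Pm minm /=; first by rewrite bs0.
rewrite leNgt; apply/negP => /minm; rewrite ltnn.
by [].
Qed.

Lemma flow_hit f (fpos : forall x, 0 < f x) x s n : 0 <= s -> s < f x ->
  (0 < n)%N ->
  (special_flow theta f (birkhoff_sum theta f n x - s) (x, s)).1 = iter n theta x.
Proof.
move=> s0 sf n0; rewrite /special_flow /=.
have S1n : f x <= birkhoff_sum theta f n x.
  by have := bs_le fpos x n0; rewrite bsS bs0 add0r.
rewrite ltrD2r ltNge S1n /=.
have -> : s + (birkhoff_sum theta f n x - s) = birkhoff_sum theta f n x.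
  by rewrite addrC subrK.
rewrite /Nt; case: pselect => [ex|nex]; last first.
  by exfalso; apply: nex; exists n.+1; apply: bs_lt.
case: ex_minnP => m Pm minm /=.
have mle : (m <= n.+1)%N by apply: minm; exact: bs_lt.
have nm : (n < m)%N.
  rewrite ltnNge; apply/negP => /(bs_le fpos x); rewrite leNgt Pm.
  done.
have -> : m = n.+1 by apply/eqP; rewrite eqn_leq mle nm.
by [].
Qed.

Lemma surv_iff f (fpos : forall x, 0 < f x) t x s : 0 <= t -> 0 <= s -> s < f x ->
  (forall tau, 0 <= tau <= t -> ~ A (special_flow theta f tau (x, s)).1) <->
  (forall n, A (iter n theta x) -> s + t < birkhoff_sum theta f n x).
Proof.
move=> t0 s0 sf; split.
- move=> H n An; rewrite ltNge; apply/negP => Snle.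
  case: n An Snle => [|n] An Snle.
    apply: (H 0); first by rewrite lexx t0.
    by rewrite /special_flow /= subr_gt0 sf /=.
  have S1n : f x <= birkhoff_sum theta f n.+1 x.
    by have := bs_le fpos x (isT : (0 < n.+1)%N); rewrite bsS bs0 add0r.
  apply: (H (birkhoff_sum theta f n.+1 x - s)); last by rewrite flow_hit.
  apply/andP; split; lra.
- move=> H tau /andP[tau0 taut] Af.
  have [n [eq Sn]] := @flow_index f x s tau (addr_ge0 s0 tau0).
  rewrite eq in Af; have := H n Af; lra.
Qed.

Definition E f t x : set R := [set s | (0 <= s /\ s < f x) /\
  forall n, A (iter n theta x) -> s + t < birkhoff_sum theta f n x].

Lemma sec_eq f (fpos : forall x, 0 < f x) t x : 0 <= t ->
  xsection (suspension f `&` survivor theta f A t) x = E f t x.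
Proof.
move=> t0; apply/seteqP; split => s; rewrite /xsection /= inE /=.
  move=> [[s0 sf] [_ H]]; split => //.
  exact: (surv_iff fpos t0 s0 sf).1 H.
move=> [[s0 sf] H]; split => //; split => //.
exact: (surv_iff fpos t0 s0 sf).2 H.
Qed.

Lemma E_meas f t x : measurable (E f t x).
Proof.
have -> : E f t x = `[0, +oo[%classic `&` `]-oo, f x[%classic `&`
   \bigcap_n [set s | A (iter n theta x) -> s + t < birkhoff_sum theta f n x].
  apply/seteqP; split => s /=; rewrite !in_itv /= ?andbT.
    by move=> [[-> ->] H]; split => // n _; exact: H.
  by move=> [[s0 sf] H]; split => // n; exact: H.
apply: measurableI; first by apply: measurableI; exact: measurable_itv.
apply: bigcapT_measurable => n.
case: (pselect (A (iter n theta x))) => h.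
  have -> : [set s | A (iter n theta x) -> s + t < birkhoff_sum theta f n x] =
     `]-oo, birkhoff_sum theta f n x - t[%classic.
    apply/seteqP; split => s /=; rewrite in_itv /=.
      by move=> /(_ h); rewrite ltrBrDr.
    by rewrite ltrBrDr.
  exact: measurable_itv.
have -> : [set s | A (iter n theta x) -> s + t < birkhoff_sum theta f n x] = setT.
  by apply/seteqP; split => s //= _ /h.
exact: measurableT.
Qed.

Lemma E_sub f t x : E f t x `<=` `[0, f x]%classic.
Proof. by move=> s [[s0 sf] _]; rewrite /= in_itv /= s0 ltW. Qed.

Lemma sec_cmp f g k t x : (forall x, 0 < f x) -> 0 < k ->
  (forall x, k * f x <= g x) -> 0 <= t ->
  (k%:E * lebesgue_measure (E f t x) <= lebesgue_measure (E g (k * t) x))%E.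
Proof.
move=> fpos k0 kfg t0.
case: (pselect (E f t x = set0)) => [->|ne].
  by rewrite measure0 mule0 measure_ge0.
have hs : has_sup (E f t x).
  split; first exact/set0P/eqP.
  by exists (f x) => y [[_ /ltW]].
set a := sup (E f t x).
have [e0 He0] : exists e, E f t x e by apply/set0P/eqP.
have a0 : 0 <= a by apply: le_trans (sup_upper_bound hs He0); case: He0 => [[]].
have sub1 : E f t x `<=` `[0, a]%classic.
  move=> y Ey; rewrite /= in_itv /=; apply/andP; split.
    by case: Ey => [[]].
  exact: sup_upper_bound.
have sub2 : `[0, k * a[%classic `<=` E g (k * t) x.
  move=> y; rewrite /= in_itv /= => /andP[y0 yka].
  have eps0 : 0 < a - y / k by rewrite subr_gt0 ltr_pdivrMr // mulrC.
  have [e Ee He] := sup_adherent eps0 hs.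
  have ye : y < k * e.
    by move: He; rewrite opprB addrCA subrr addr0 ltr_pdivrMr // mulrC.
  case: Ee => [[e0' ef] H].
  split; first split => //.
    apply: (lt_le_trans ye); apply: (le_trans _ (kfg x)).
    by rewrite ler_pM2l // ltW.
  move=> n An; have := H n An => Hn.
  apply: (lt_le_trans _ (bs_scale (ltW k0) kfg x n)).
  have : k * (e + t) < k * birkhoff_sum theta f n x by rewrite ltr_pM2l.
  rewrite mulrDr; lra.
apply: (@le_trans _ _ (k%:E * a%:E)%E).
  rewrite lee_pmul2l ?lte_fin //.
  have m1 : (lebesgue_measure (E f t x) <= lebesgue_measure (`[0%R, a]%classic : set R))%E.
    by apply: le_measure => //; rewrite inE; [exact: E_meas|exact: measurable_itv].
  apply: (le_trans m1).
  rewrite lebesgue_measure_itv /= lte_fin.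
  by case: ifP => _; rewrite ?oppr0 ?adde0 ?lee_fin.
have m2 : (lebesgue_measure (`[0%R, (k * a)%R[%classic : set R) <= lebesgue_measure (E g (k * t) x))%E.
  by apply: le_measure => //; rewrite inE; [exact: measurable_itv|exact: E_meas].
apply: (le_trans _ m2).
rewrite lebesgue_measure_itv /= lte_fin.
case: ifP => h; rewrite -EFinM; first by rewrite oppr0 adde0.
have : k * a <= 0 by rewrite leNgt h.
have : 0 <= k * a by rewrite mulr_ge0 // ltW.
move=> h1 h2; have -> : k * a = 0 by apply/eqP; rewrite eq_le h1 h2.
by [].
Qed.

End Flow.

Section Integ.
Context d (X : measurableType d) (R : realType).
Variable mu : {measure set X -> \bar R}.

Lemma int_le (f g : X -> \bar R) : (forall x, 0 <= f x)%E ->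
  (forall x, f x <= g x)%E -> (\int[mu]_x f x <= \int[mu]_x g x)%E.
Proof.
move=> f0 fg; have g0 x : (0 <= g x)%E := le_trans (f0 x) (fg x).
rewrite (ge0_integralTE mu f0) (ge0_integralTE mu g0).
apply: ge_ereal_sup => _ [h hf <-]; apply: ereal_sup_ubound => /=.
by exists h => // y; exact: le_trans (hf y) (fg y).
Qed.

Lemma int_scale (k : R) (f : X -> \bar R) : 0 < k -> (forall x, 0 <= f x)%E ->
  (k%:E * \int[mu]_x f x <= \int[mu]_x (k%:E * f x))%E.
Proof.
move=> k0 f0; have kf0 x : (0 <= k%:E * f x)%E by rewrite mule_ge0 // lee_fin ltW.
rewrite (ge0_integralTE mu f0) (ge0_integralTE mu kf0) -ereal_sup_pZl //.
apply: ge_ereal_sup => _ [_ [h hf <-] <-]; apply: ereal_sup_ubound => /=.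
exists (scale_nnsfun h (ltW k0)).
  move=> y /=; rewrite EFinM; apply: lee_wpmul2l; first by rewrite lee_fin ltW.
  exact: hf.
exact: sintegralrM.
Qed.

End Integ.

Section Rate.
Context d (X : measurableType d) (R : realType).
Variables (mu : probability X R) (theta : X -> X) (A : set X).
Implicit Types (f g : X -> R).

Lemma F_eq f (fpos : forall x, 0 < f x) t : 0 <= t ->
  susp_measure mu f (survivor theta f A t) =
  (\int[mu]_x lebesgue_measure (E theta A f t x))%E.
Proof.
move=> t0; rewrite /susp_measure /product_measure1 /=.
by apply: eq_integral => x _; rewrite /= sec_eq.
Qed.

Lemma F_cmp f g k t : (forall x, 0 < f x) -> (forall x, 0 < g x) -> 0 < k ->
  (forall x, k * f x <= g x) -> 0 <= t ->
  (k%:E * susp_measure mu f (survivor theta f A t) <=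
   susp_measure mu g (survivor theta g A (k * t)))%E.
Proof.
move=> fpos gpos k0 kfg t0.
rewrite F_eq // F_eq //; last by rewrite mulr_ge0 // ltW.
apply: (le_trans (int_scale _ k0 _)) => //.
apply: int_le => x; first by rewrite mule_ge0 // lee_fin ltW.
exact: sec_cmp.
Qed.

Lemma F_fin f (fpos : forall x, 0 < f x) M (fM : forall x, f x <= M) t : 0 <= t ->
  (susp_measure mu f (survivor theta f A t) <= M%:E)%E.
Proof.
move=> t0; rewrite F_eq //.
have M0 : 0 <= M by pose x0 : X := point; apply: le_trans (fM x0); exact/ltW.
apply: (@le_trans _ _ (\int[mu]_x (cst M%:E x))%E).
  apply: int_le => x //.
  have m1 : (lebesgue_measure (E theta A f t x) <=
             lebesgue_measure (`[0%R, M]%classic : set R))%E.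
    apply: le_measure; rewrite ?inE; [exact: E_meas|exact: measurable_itv|].
    move=> s /E_sub; rewrite /= !in_itv /= => /andP[-> /le_trans]; exact.
  apply: (le_trans m1); rewrite lebesgue_measure_itv /= lte_fin.
  by case: ifP => _; rewrite ?oppr0 ?adde0 ?lee_fin.
rewrite integral_cst //.
set m := (X in (M%:E * X)%E); have -> : m = 1%E by exact: probability_setT.
by rewrite mule1.
Qed.

End Rate.

Lemma step (R : realType) (k t e a b : R) : 0 < k -> 0 < t -> - ln k < e * t ->
  0 < a -> k * a <= b -> k * - ((k * t)^-1 * ln b) <= - (t^-1 * ln a) + e.
Proof.
move=> k0 t0 Ht4 a0 hab.
have b0 : 0 < b by apply: lt_le_trans hab; rewrite mulr_gt0.
have hln : ln k + ln a <= ln b.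
  by rewrite -lnM ?posrE // ler_ln ?posrE // mulr_gt0.
have -> : k * - ((k * t)^-1 * ln b) = - (t^-1 * ln b).
  by rewrite invfM mulrN !mulrA mulfV ?gt_eqF // mul1r.
have u0 : 0 < t^-1 by rewrite invr_gt0.
have tu : t^-1 * t = 1 by rewrite mulVf // gt_eqF.
have hk' : t^-1 * - ln k < t^-1 * (e * t) by rewrite ltr_pM2l.
rewrite mulrCA tu mulr1 mulrN in hk'.
have := ler_wpM2l (ltW u0) hln; rewrite mulrDr => h.
move: hk' h; move: (t^-1 * ln k) (t^-1 * ln a) (t^-1 * ln b) => x y z.
clear; move=> *; lra.
Qed.

Section RateCmp.
Context d (X : measurableType d) (R : realType).
Variables (mu : probability X R) (theta : X -> X) (A : set X).
Implicit Types (f g : X -> R).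

Lemma rate_cmp f g k rf rg Mf Mg :
  (forall x, 0 < f x) -> (forall x, 0 < g x) -> 0 < k ->
  (forall x, k * f x <= g x) -> (forall x, f x <= Mf) -> (forall x, g x <= Mg) ->
  escape_rate_is mu theta A f rf -> escape_rate_is mu theta A g rg ->
  k * rg <= rf.
Proof.
move=> fpos gpos k0 kfg fM gM [Hf Lf] [_ Lg].
apply/ler_addgt0Pr => e e0.
set Lf' := (fun t => _) in Lf; set Lg' := (fun t => _) in Lg.
have kto : (fun t : R => k * t) @ +oo --> +oo.
  apply/cvgryPge => B; exists (B / k); split; first exact: num_real.
  by move=> t Bt; rewrite mulrC -ler_pdivrMr //; exact: ltW.
have Lgk : (fun t => Lg' (k * t)) @ +oo --> rg by have := cvg_comp _ _ kto Lg.
have L1 : (fun t => k * Lg' (k * t)) @ +oo --> k * rg.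
  exact: (cvgM (cvg_cst k) Lgk).
have L2 : (fun t => Lf' t + e) @ +oo --> rf + e.
  exact: (cvgD Lf (cvg_cst e)).
apply: (ler_cvg_to L1 L2).
have [T0 [T0r HT0]] := Hf.
exists (Num.max T0 (Num.max 0 (- ln k / e))); split; first exact: num_real.
move=> t; rewrite !gt_max => /and3P[Ht1 Ht2 Ht3].
have Fpos := HT0 _ Ht1.
have t0 : 0 <= t by exact: ltW.
have ffin : susp_measure mu f (survivor theta f A t) \is a fin_num.
  rewrite ge0_fin_numE ?(ltW Fpos) //.
  exact: (le_lt_trans (F_fin mu theta A fpos fM t0)) (ltry _).
have kt0 : 0 <= k * t by rewrite mulr_ge0 // ltW.
have HC := F_cmp mu theta A fpos gpos k0 kfg t0.
have gpos' : (0 < susp_measure mu g (survivor theta g A (k * t)))%E.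
  apply: (lt_le_trans _ HC); rewrite mule_gt0 // lte_fin.
have gfin : susp_measure mu g (survivor theta g A (k * t)) \is a fin_num.
  rewrite ge0_fin_numE ?(ltW gpos') //.
  exact: (le_lt_trans (F_fin mu theta A gpos gM kt0)) (ltry _).
rewrite /Lf' /Lg' /=.
have Ht4 : - ln k < e * t by rewrite mulrC -ltr_pdivrMr.
apply: (step k0 Ht2 Ht4).
  by apply: fine_gt0; rewrite Fpos /= ltey_eq ffin.
by move: HC; rewrite -(fineK ffin) -(fineK gfin) -EFinM lee_fin.
Qed.

End RateCmp.

Lemma bounded_le (R : realType) (T : Type) (f : T -> R) :
  [bounded f x | x in [set: T]] -> exists M, forall x, `|f x| <= M.
Proof.
move=> [M [Mr HM]]; exists (M + 1) => x.
by apply: (HM (M + 1)); rewrite ?ltrDl.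
Qed.

Theorem proposition3p12 (d : measure_display) (X : measurableType d)
  (R : realType) (mu : probability X R) (theta : X -> X) (A : set X) :
  measure_preserving mu theta ->
  is_hole mu theta A ->
  forall (phi : X -> R) (r : R),
    ceiling_function phi -> bounded_fun phi ->
    escape_rate_is mu theta A phi r ->
    forall eps : R, 0 < eps ->
    exists2 delta : R, 0 < delta &
      forall (psi : X -> R) (r' : R),
        ceiling_function psi -> bounded_fun psi ->
        escape_rate_is mu theta A psi r' ->
        (forall x, `|phi x - psi x| <= delta) ->
        `|r - r'| < eps.
Proof.
move=> _ _ phi r [_ cpos] bphi Hr eps eps0.
have [M1 HM1] := bounded_le bphi.
set c := inf (range phi) in cpos.
have phic x : c <= phi x.
  apply: ge_inf; last by exists x.
  exists (- M1) => _ [y _ <-]; have := HM1 y; rewrite ler_norml => /andP[] //.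
set E0 := eps / (2 * (`|r| + 1)).
have E00 : 0 < E0 by rewrite /E0 divr_gt0 // mulr_gt0 // ltr_wpDl.
have E0e : E0 * (2 * (`|r| + 1)) = eps by rewrite /E0 mulfVK // gt_eqF // mulr_gt0 // ltr_wpDl.
set eta := Num.min (1 / 2) E0.
have eta0 : 0 < eta by rewrite lt_min E00 divr_gt0.
have eta1 : eta <= 1 / 2 by rewrite ge_min lexx.
have eta2 : eta <= E0 by rewrite ge_min lexx orbT.
exists (c * eta); first exact: mulr_gt0.
move=> psi r' _ bpsi Hr' close.
have [M2 HM2] := bounded_le bpsi.
have hpsi x : (1 - eta) * phi x <= psi x /\ psi x <= (1 + eta) * phi x.
  have := close x; rewrite ler_norml => /andP[h1 h2].
  have := ler_wpM2r (ltW eta0) (phic x) => h3.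
  split; lra.
have phipos x : 0 < phi x by exact: lt_le_trans cpos (phic x).
have psipos x : 0 < psi x.
  have [h _] := hpsi x; apply: lt_le_trans h; apply: mulr_gt0 => //; lra.
have phiM x : phi x <= M1 by exact: le_trans (ler_norm _) (HM1 x).
have psiM x : psi x <= M2 by exact: le_trans (ler_norm _) (HM2 x).
have k10 : 0 < 1 - eta by lra.
have k20 : 0 < (1 + eta)^-1 by rewrite invr_gt0; lra.
have h1 := rate_cmp phipos psipos k10 (fun x => (hpsi x).1) phiM psiM Hr Hr'.
have kfg2 x : (1 + eta)^-1 * psi x <= phi x.
  rewrite mulrC ler_pdivrMr; last lra.
  by rewrite mulrC; exact: (hpsi x).2.
have h2 := rate_cmp psipos phipos k20 kfg2 psiM phiM Hr' Hr.
have e1 : 0 < 1 + eta by lra.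
have h2' : r <= (1 + eta) * r'.
  by have := ler_wpM2l (ltW e1) h2; rewrite mulrA mulfV ?gt_eqF // mul1r.
rewrite mulrBl mul1r in h1; rewrite mulrDl mul1r in h2'.
clear h2 kfg2 hpsi phipos psipos phiM psiM k10 k20 HM1 HM2 phic Hr Hr' close.
have er0 : 0 <= eta * r' by lra.
have r'0 : 0 <= r' by move: er0; rewrite pmulr_rge0.
have e1h : eta * r' <= 1 / 2 * r' by exact: ler_wpM2r.
have r0 : 0 <= r by lra.
have ra : `|r| = r by rewrite ger0_norm.
rewrite ra in E0e.
have r'2 : r' <= 2 * r by lra.
have e2 : eta * r' <= eta * (2 * r) by rewrite ler_wpM2l // ltW.
have e3 : eta * (2 * r) <= E0 * (2 * r) by apply: ler_wpM2r => //; lra.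
have e4 : E0 * (2 * r) < E0 * (2 * (r + 1)) by rewrite ltr_pM2l //; lra.
rewrite ltr_norml; apply/andP; split; lra.
Qed.
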